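(* Let $(A,\mathcal H)$ be a commutative Hopf algebroid such that $\mathcal H$ is flat as an $A$-module via $s$, and let $\mathcal K\subseteq\mathcal H$ be a sub-Hopf algebroid over the same base $A$ such that $\mathcal H$ is pure over $\mathcal K$. Then $\mathcal H\mathcal K^+$ is a normal Hopf ideal of $\mathcal H$ and $\mathcal H$ is pure over $\mathcal H^{\mathrm{co}\,\mathcal H/\mathcal H\mathcal K^+}$.
   Context: A commutative Hopf algebroid $(A,\mathcal H)$ over a field $\Bbbk$: commutative $\Bbbk$-algebras $A,\mathcal H$ with algebra maps $s,t:A\to\mathcal H$, $\varepsilon:\mathcal H\to A$, $\Delta:\mathcal H\to\mathcal H\otimes_A\mathcal H$ (left factor an $A$-module via $t$, right via $s$), $\mathcal S:\mathcal H\to\mathcal H$ such that $(\mathcal H,\Delta,\varepsilon)$ is a coassociative counital $A$-coring, $\mathcal Ss=t$, $\mathcal St=s$, $\mathcal S^2=\mathrm{id}$, $\sum\mathcal S(u_1)u_2=t\varepsilon(u)$, $\sum u_1\mathcal S(u_2)=s\varepsilon(u)$ ($\Delta(u)=\sum u_1\otimes_Au_2$). $\mathcal K^+=\mathcal K\cap\ker\varepsilon$. A sub-Hopf algebroid $\mathcal K$: subalgebra containing $s(A),t(A)$, stable under $\mathcal S$, with $\Delta(\mathcal K)\subseteq\mathcal K\otimes_A\mathcal K$. A Hopf ideal: ideal $I$ with $\varepsilon(I)=0$, $\Delta(I)\subseteq$ image of $\mathcal H\otimes_AI+I\otimes_A\mathcal H$, $\mathcal S(I)\subseteq I$. With $\langle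 s-t\rangle$ the ideal generated by all $s(a)-t(a)$, $\overline{\mathcal H}=\mathcal H/\langle s-t\rangle$ (classes $\bar x$, an $A$-algebra via $\overline{s(a)}$), a Hopf ideal $I$ is normal if $\langle s-t\rangle\subseteq I$ and for every $x\in I$, $\sum\overline{x_2}\otimes_A\mathcal S(x_1)x_3\in\overline{\mathcal H}\otimes_A\mathcal H$ lies in the image of $(I/\langle s-t\rangle)\otimes_A\mathcal H$. $\mathcal H^{\mathrm{co}\,\mathcal H/I}=\{x:\sum\pi(x_1)\otimes_Ax_2=\pi(1)\otimes_Ax\}$ with $\pi:\mathcal H\to\mathcal H/I$. ''Pure over $B$'': inclusion $B\to\mathcal H$ is a pure morphism of $B$-modules. *)

(* Defs.v *)
(* Commutative Hopf algebroids over a field, with tensor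
   products over a base ring represented by (Sweedler) lists of pure tensors
   modulo the relations presenting the tensor product. *)
From HB Require Import structures.
From mathcomp Require Import all_boot all_order all_algebra.
Set Implicit Arguments. Unset Strict Implicit. Unset Printing Implicit Defensive.
Import GRing.Theory.
Local Open Scope ring_scope.

(* An element of the tensor product is represented by a finite list of pure
   tensors  [:: (m1,n1); ...]  (meaning  m1 (x) n1 + ...).
   - [dom] : the scalars that are balanced over (the base ring, possibly a
     subring given by a predicate),
   - [actM] : right action of scalars on the left factor,
   - [actN] : left action of scalars on the right factor,
   - [eqM]  : the equality of the left factor (to allow quotient modules M/J:
     eqM m m' := (m - m') \in J; use (@eq M) for M itself).
   [tens_eq] is the congruence on the free commutative monoid on M*N generated
   by the defining relations of the tensor product; the quotient is exactly
   (M/~) (x)_B N. *)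
Section Tensor.
Variables (Sc : Type) (dom : Sc -> Prop) (M N : zmodType)
  (actM : Sc -> M -> M) (actN : Sc -> N -> N) (eqM : M -> M -> Prop).

Inductive tens_eq : seq (M * N) -> seq (M * N) -> Prop :=
| te_refl l : tens_eq l l
| te_sym l l' : tens_eq l l' -> tens_eq l' l
| te_trans l1 l2 l3 : tens_eq l1 l2 -> tens_eq l2 l3 -> tens_eq l1 l3
| te_perm l l' : perm_eq l l' -> tens_eq l l'
| te_cat l1 l2 l1' l2' :
    tens_eq l1 l1' -> tens_eq l2 l2' -> tens_eq (l1 ++ l2) (l1' ++ l2')
| te_addl m m' n : tens_eq [:: (m + m', n)] [:: (m, n); (m', n)]
| te_addr m n n' : tens_eq [:: (m, n + n')] [:: (m, n); (m, n')]
| te_zero n : tens_eq [:: (0, n)] [::]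
| te_bal a m n : dom a -> tens_eq [:: (actM a m, n)] [:: (m, actN a n)]
| te_eqM m m' n : eqM m m' -> tens_eq [:: (m, n)] [:: (m', n)].
End Tensor.

(* Triple tensor product  H (x)_A H (x)_A H  (left factors via t on the right,
   right factors via s on the left). *)
Section Tensor3.
Variables (A H : comNzRingType) (s t : A -> H).

Inductive tens3_eq : seq (H * H * H) -> seq (H * H * H) -> Prop :=
| t3_refl l : tens3_eq l l
| t3_sym l l' : tens3_eq l l' -> tens3_eq l' l
| t3_trans l1 l2 l3 : tens3_eq l1 l2 -> tens3_eq l2 l3 -> tens3_eq l1 l3
| t3_perm l l' : perm_eq l l' -> tens3_eq l l'
| t3_cat l1 l2 l1' l2' :
    tens3_eq l1 l1' -> tens3_eq l2 l2' -> tens3_eq (l1 ++ l2) (l1' ++ l2')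
| t3_add1 x x' y z : tens3_eq [:: (x + x', y, z)] [:: (x, y, z); (x', y, z)]
| t3_add2 x y y' z : tens3_eq [:: (x, y + y', z)] [:: (x, y, z); (x, y', z)]
| t3_add3 x y z z' : tens3_eq [:: (x, y, z + z')] [:: (x, y, z); (x, y, z')]
| t3_zero y z : tens3_eq [:: (0, y, z)] [::]
| t3_bal1 a x y z : tens3_eq [:: (x * t a, y, z)] [:: (x, s a * y, z)]
| t3_bal2 a x y z : tens3_eq [:: (x, y * t a, z)] [:: (x, y, s a * z)].
End Tensor3.

Section HopfAlgebroid.
Variables (k : fieldType) (A H : comAlgType k).
Variables (s t : {lrmorphism A -> H}) (eps : {lrmorphism H -> A})
  (Delta : H -> seq (H * H)) (S : {lrmorphism H -> H}).

Definition hteq := tens_eq (fun _ : A => True)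
  (fun a (x : H) => x * t a) (fun a (y : H) => s a * y) (@eq H).

Definition hopf_algebroid : Prop :=
  ((forall x y, hteq (Delta (x + y)) (Delta x ++ Delta y)) /\
   (forall (c : k) x,
       hteq (Delta (c *: x)) [seq (c *: p.1, p.2) | p <- Delta x]) /\
   hteq (Delta 1) [:: (1, 1)] /\
   (forall x y, hteq (Delta (x * y))
      [seq (p.1 * q.1, p.2 * q.2) | p <- Delta x, q <- Delta y])) /\
  ((forall a x, hteq (Delta (s a * x)) [seq (s a * p.1, p.2) | p <- Delta x]) /\
   (forall a x, hteq (Delta (x * t a)) [seq (p.1, p.2 * t a) | p <- Delta x]) /\
   (forall a, eps (s a) = a) /\ (forall a, eps (t a) = a) /\
   (forall x, tens3_eq s t
      [seq (q.1, q.2, p.2) | p <- Delta x, q <- Delta p.1]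
      [seq (p.1, q.1, q.2) | p <- Delta x, q <- Delta p.2]) /\
   (forall x, \sum_(p <- Delta x) s (eps p.1) * p.2 = x) /\
   (forall x, \sum_(p <- Delta x) p.1 * t (eps p.2) = x)) /\
  ((forall a, S (s a) = t a) /\ (forall a, S (t a) = s a) /\
   (forall x, S (S x) = x) /\
   (forall x, \sum_(p <- Delta x) S p.1 * p.2 = t (eps x)) /\
   (forall x, \sum_(p <- Delta x) p.1 * S p.2 = s (eps x))).

Definition is_ideal (I : H -> Prop) : Prop :=
  [/\ I 0, (forall x y, I x -> I y -> I (x + y)) &
      (forall h x, I x -> I (h * x))].

Definition ideal_gen (X : H -> Prop) (x : H) : Prop :=
  exists l : seq (H * H),
    (forall p, p \in l -> X p.2) /\ x = \sum_(p <- l) p.1 * p.2.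

Definition st_ideal : H -> Prop :=
  ideal_gen (fun y => exists a, y = s a - t a).

Definition HKplus (K : H -> Prop) : H -> Prop :=
  ideal_gen (fun y => K y /\ eps y = 0).

Definition hopf_ideal (I : H -> Prop) : Prop :=
  [/\ is_ideal I, (forall x, I x -> eps x = 0),
      (forall x, I x -> exists l : seq (H * H),
          (forall p, p \in l -> I p.1 \/ I p.2) /\ hteq l (Delta x)) &
      (forall x, I x -> I (S x))].

(* equality in  Hbar (x)_A H,  Hbar = H / <s - t>  (an A-algebra via sbar) *)
Definition barteq := tens_eq (fun _ : A => True)
  (fun a (x : H) => x * s a) (fun a (y : H) => s a * y)
  (fun x y => st_ideal (x - y)).

Definition normal_hopf_ideal (I : H -> Prop) : Prop :=
  [/\ hopf_ideal I, (forall x, st_ideal x -> I x) &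
      forall x, I x -> exists l : seq (H * H),
        (* an element of the image of (I/<s-t>) (x)_A H in Hbar (x)_A H *)
        (forall p, p \in l -> I p.1) /\
        barteq l [seq (q.2, S q.1 * p.2) | p <- Delta x, q <- Delta p.1]].

Definition coinv (I : H -> Prop) (x : H) : Prop :=
  tens_eq (fun _ : A => True) (fun a (y : H) => y * t a)
    (fun a (z : H) => s a * z) (fun y z => I (y - z))
    (Delta x) [:: (1, x)].

Definition sub_hopf_algebroid (K : H -> Prop) : Prop :=
  [/\ (forall a, K (s a) /\ K (t a)),
      (forall x y, K x -> K y -> K (x + y)), (forall x, K x -> K (- x)),
      (forall x y, K x -> K y -> K (x * y)) &
   [/\ (forall (c : k) x, K x -> K (c *: x)),
      (forall x, K x -> K (S x)) &
      (forall x, K x -> exists l : seq (H * H),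
          (forall p, p \in l -> K p.1 /\ K p.2) /\ hteq l (Delta x))]].

(* M is a module over the subring B of H (action only constrained on B) *)
Definition module_over (R : ringType) (B : R -> Prop) (M : zmodType)
  (act : R -> M -> M) : Prop :=
  [/\ (forall b m m', B b -> act b (m + m') = act b m + act b m'),
      (forall b b' m, B b -> B b' -> act (b + b') m = act b m + act b' m),
      (forall b b' m, B b -> B b' -> act (b * b') m = act b (act b' m)) &
      (forall m, act 1 m = m)].

(* H is pure over the subring B:  for every B-module M, the canonical map
   M = M (x)_B B -> M (x)_B H,  m |-> m (x) 1,  is injective. *)
Definition pure_over (B : H -> Prop) : Prop :=
  forall (M : zmodType) (act : H -> M -> M), module_over B act ->
  forall m m' : M,
    tens_eq B act (fun b (h : H) => b * h) (@eq M) [:: (m, 1)] [:: (m', 1)] ->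
    m = m'.

Definition flat_via_s : Prop :=
  forall (M M' : zmodType) (actM : A -> M -> M) (actM' : A -> M' -> M'),
  module_over (fun _ => True) actM -> module_over (fun _ => True) actM' ->
  forall f : {additive M -> M'},
  (forall a m, f (actM a m) = actM' a (f m)) -> injective f ->
  forall l l' : seq (M * H),
    tens_eq (fun _ : A => True) actM' (fun a (h : H) => s a * h) (@eq M')
      [seq (f p.1, p.2) | p <- l] [seq (f p.1, p.2) | p <- l'] ->
    tens_eq (fun _ : A => True) actM (fun a (h : H) => s a * h) (@eq M) l l'.

End HopfAlgebroid.

(* Main.v *)
Require Import Defs.
From HB Require Import structures.
From Stdlib Require Import ClassicalEpsilon FunctionalExtensionality PropExtensionality.
From mathcomp Require Import all_boot all_order all_algebra.
From mathcomp Require Import generic_quotient ring_quotient zify ring.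
Set Implicit Arguments. Unset Strict Implicit. Unset Printing Implicit Defensive.
Import GRing.Theory.
Local Open Scope ring_scope.

Lemma perm_swap (T1 T2 R : eqType) (f : T1 -> T2 -> R) (s : seq T1) (t : seq T2) :
  perm_eq [seq f x y | x <- s, y <- t] [seq f x y | y <- t, x <- s].
Proof.
apply/permP => a.
rewrite -!sum1_count !(big_mkcond a) !big_flatten /= !big_map.
under eq_bigr do rewrite big_map.
under [RHS]eq_bigr do rewrite big_map.
by rewrite exchange_big.
Qed.

Section TensGen.
Variables (Sc : Type) (dom : Sc -> Prop) (M N : zmodType)
  (actM : Sc -> M -> M) (actN : Sc -> N -> N) (eqM : M -> M -> Prop).
Local Notation TE := (tens_eq dom actM actN eqM).

Lemma TEaddl m m' n : TE [:: (m + m', n)] [:: (m, n); (m', n)].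
Proof. exact: te_addl. Qed.
Lemma TEaddr m n n' : TE [:: (m, n + n')] [:: (m, n); (m, n')].
Proof. exact: te_addr. Qed.
Lemma TEzero n : TE [:: (0, n)] [::].
Proof. exact: te_zero. Qed.
Lemma TEbal a m n : dom a -> TE [:: (actM a m, n)] [:: (m, actN a n)].
Proof. exact: te_bal. Qed.
Lemma TEeqM m m' n : eqM m m' -> TE [:: (m, n)] [:: (m', n)].
Proof. exact: te_eqM. Qed.

Lemma te_cons x y l l' : TE [:: x] [:: y] -> TE l l' -> TE (x :: l) (y :: l').
Proof. by move=> h1 h2; exact: (te_cat h1 h2). Qed.
Lemma te_catl l l1 l2 : TE l1 l2 -> TE (l ++ l1) (l ++ l2).
Proof. by move=> h; apply: te_cat => //; apply: te_refl. Qed.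
Lemma te_catr l l1 l2 : TE l1 l2 -> TE (l1 ++ l) (l2 ++ l).
Proof. by move=> h; apply: te_cat => //; apply: te_refl. Qed.

Lemma te_negl m n : TE [:: (m, n); (- m, n)] [::].
Proof.
apply: te_trans (te_sym (TEaddl _ _ _)) _.
by rewrite subrr; apply: te_zero.
Qed.

Lemma te_zero_r m : TE [:: (m, 0)] [::].
Proof.
have h1 : TE [:: (m, 0)] [:: (m, 0); (m, 0)].
  by have := TEaddr m 0 0; rewrite addr0.
apply: te_trans (_ : TE ([:: (m,0)] ++ [:: (m, 0); (- m, 0)]) _).
  by apply: te_sym; rewrite -{2}[[:: (m,0)]]cats0; apply: te_catl; apply: te_negl.
apply: te_trans (_ : TE ([:: (m,0); (m, 0)] ++ [:: (- m, 0)]) _).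
  by apply: te_refl.
apply: te_trans (_ : TE ([:: (m,0)] ++ [:: (- m, 0)]) _).
  by apply: te_catr; apply: te_sym.
exact: te_negl.
Qed.

Lemma te_collect_r I (r : seq I) (F : I -> N) m :
  TE [:: (m, \sum_(i <- r) F i)] [seq (m, F i) | i <- r].
Proof.
elim: r => [|i r IH]; first by rewrite big_nil; apply: te_zero_r.
rewrite big_cons /=; apply: te_trans (TEaddr _ _ _) _.
by apply: te_cons => //; apply: te_refl.
Qed.

Lemma te_collect_l I (r : seq I) (F : I -> M) n :
  TE [:: (\sum_(i <- r) F i, n)] [seq (F i, n) | i <- r].
Proof.
elim: r => [|i r IH]; first by rewrite big_nil; apply: TEzero.
rewrite big_cons /=; apply: te_trans (TEaddl _ _ _) _.
by apply: te_cons => //; apply: te_refl.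
Qed.

Lemma te_split I (r : seq I) (f g g' : I -> M * N) :
  (forall i, TE [:: f i] [:: g i; g' i]) ->
  TE (map f r) (map g r ++ map g' r).
Proof.
move=> h; elim: r => [|i r IH] /=; first exact: te_refl.
apply: te_trans (_ : TE ([:: g i; g' i] ++ (map g r ++ map g' r)) _).
  exact: (te_cat (h i) IH).
apply: te_perm => /=; rewrite perm_cons -cat1s -[g' i :: _]cat1s.
by rewrite perm_catCA.
Qed.

Lemma te_flat I (r : seq I) (F G : I -> seq (M * N)) :
  (forall i, TE (F i) (G i)) -> TE (flatten (map F r)) (flatten (map G r)).
Proof.
move=> h; elim: r => [|i r IH] /=; first exact: te_refl.
exact: te_cat.
Qed.

Lemma te_flat_nil I (r : seq I) (F : I -> seq (M * N)) :
  (forall i, TE (F i) [::]) -> TE (flatten (map F r)) [::].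
Proof.
move=> h; elim: r => [|i r IH] /=; first exact: te_refl.
by rewrite -[[::]]/([::] ++ [::]); apply: te_cat.
Qed.

Lemma te_sum (Z : zmodType) (f : M -> N -> Z) :
  (forall m m' n, f (m + m') n = f m n + f m' n) ->
  (forall m n n', f m (n + n') = f m n + f m n') ->
  (forall a m n, dom a -> f (actM a m) n = f m (actN a n)) ->
  (forall m m' n, eqM m m' -> f m n = f m' n) ->
  forall l l', TE l l' -> \sum_(p <- l) f p.1 p.2 = \sum_(p <- l') f p.1 p.2.
Proof.
move=> hl hr hb he l l'; elim => {l l'}.
- by [].
- by move=> ???->.
- by move=> ??? _ -> _ ->.
- by move=> l l' p; apply: perm_big.
- by move=> ???? _ h1 _ h2; rewrite !big_cat h1 h2.
- by move=> m m' n; rewrite !big_cons !big_nil hl !addr0.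
- by move=> m n n'; rewrite !big_cons !big_nil hr !addr0.
- move=> n; rewrite big_cons !big_nil addr0.
  by have := hl 0 0 n; rewrite addr0 => /eqP; rewrite -subr_eq subrr eq_sym => /eqP.
- by move=> a m n da; rewrite !big_cons !big_nil hb.
- by move=> m m' n e; rewrite !big_cons !big_nil (he _ _ _ e).
Qed.

Section Map.
Variables (Sc' : Type) (dom' : Sc' -> Prop) (M' N' : zmodType)
  (actM' : Sc' -> M' -> M') (actN' : Sc' -> N' -> N') (eqM' : M' -> M' -> Prop).
Local Notation TE' := (tens_eq dom' actM' actN' eqM').

Lemma te_map (F : M * N -> seq (M' * N')) :
 (forall m m' n, TE' (F (m + m', n)) (F (m, n) ++ F (m', n))) ->
 (forall m n n', TE' (F (m, n + n')) (F (m, n) ++ F (m, n'))) ->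
 (forall n, TE' (F (0, n)) [::]) ->
 (forall a m n, dom a -> TE' (F (actM a m, n)) (F (m, actN a n))) ->
 (forall m m' n, eqM m m' -> TE' (F (m, n)) (F (m', n))) ->
 forall l l', TE l l' -> TE' (flatten (map F l)) (flatten (map F l')).
Proof.
move=> hl hr hz hb he l l'; elim => {l l'}.
- by move=> l; apply: te_refl.
- by move=> l l' _ h; apply: te_sym.
- by move=> l1 l2 l3 _ h1 _ h2; apply: te_trans h1 h2.
- by move=> l l' p; apply: te_perm; apply: perm_flatten; apply: perm_map.
- by move=> l1 l2 l1' l2' _ h1 _ h2; rewrite !map_cat !flatten_cat; apply: te_cat.
- by move=> m m' n /=; rewrite !cats0; apply: hl.
- by move=> m n n' /=; rewrite !cats0; apply: hr.
- by move=> n /=; rewrite cats0; apply: hz.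
- by move=> a m n d /=; rewrite !cats0; apply: hb.
- by move=> m m' n e /=; rewrite !cats0; apply: he.
Qed.
End Map.
End TensGen.

Section IdealGen.
Variables (k : fieldType) (A H : comAlgType k).
Variable X : H -> Prop.

Lemma ig_gen y : X y -> ideal_gen X y.
Proof.
move=> Xy; exists [:: (1, y)]; split; first by move=> p; rewrite inE => /eqP ->.
by rewrite big_cons big_nil mul1r addr0.
Qed.

Lemma ig0 : ideal_gen X 0.
Proof. by exists [::]; split; [move=> ?; rewrite in_nil | rewrite big_nil]. Qed.

Lemma igD x y : ideal_gen X x -> ideal_gen X y -> ideal_gen X (x + y).
Proof.
move=> [l [hl ->]] [l' [hl' ->]]; exists (l ++ l'); split; last by rewrite big_cat.
by move=> p; rewrite mem_cat => /orP [] ?; [apply: hl | apply: hl'].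
Qed.

Lemma igM h x : ideal_gen X x -> ideal_gen X (h * x).
Proof.
move=> [l [hl ->]]; exists [seq (h * p.1, p.2) | p <- l]; split.
  by move=> p /mapP [q qin ->] /=; exact: hl qin.
rewrite big_map big_distrr /=; apply: eq_bigr => p _; by rewrite mulrA.
Qed.

Lemma igN x : ideal_gen X x -> ideal_gen X (- x).
Proof. by move=> h; rewrite -mulN1r; apply: igM. Qed.

Lemma igB x y : ideal_gen X x -> ideal_gen X y -> ideal_gen X (x - y).
Proof. by move=> h1 h2; apply: igD => //; apply: igN. Qed.

Lemma igMr h x : ideal_gen X x -> ideal_gen X (x * h).
Proof. by rewrite mulrC; apply: igM. Qed.

Lemma ig_sum (I : eqType) (r : seq I) (F : I -> H) :
  (forall i, i \in r -> ideal_gen X (F i)) -> ideal_gen X (\sum_(i <- r) F i).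
Proof.
elim: r => [|i r IH] h; first by rewrite big_nil; apply: ig0.
rewrite big_cons; apply: igD; first by apply: h; rewrite inE eqxx.
by apply: IH => j jr; apply: h; rewrite inE jr orbT.
Qed.
End IdealGen.

Lemma mapE1 (T U : Type) (f : T -> U) (l : seq T) :
  map f l = flatten (map (fun x => [:: f x]) l).
Proof. by elim: l => //= x l ->. Qed.

Section TensMore.
Variables (Sc : Type) (dom : Sc -> Prop) (M N : zmodType)
  (actM : Sc -> M -> M) (actN : Sc -> N -> N) (eqM : M -> M -> Prop).
Local Notation TE := (tens_eq dom actM actN eqM).

Lemma te_mapP I (r : seq I) (f g : I -> M * N) :
  (forall i, TE [:: f i] [:: g i]) -> TE (map f r) (map g r).
Proof.
move=> h; elim: r => [|i r IH] /=; first exact: te_refl.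
exact: te_cons.
Qed.

Lemma te_mapP_in (I : eqType) (r : seq I) (f g : I -> M * N) :
  (forall i, i \in r -> TE [:: f i] [:: g i]) -> TE (map f r) (map g r).
Proof.
elim: r => [|i r IH] h /=; first exact: te_refl.
apply: te_cons; first by apply: h; rewrite inE eqxx.
by apply: IH => j jr; apply: h; rewrite inE jr orbT.
Qed.

Lemma te_flat_in (I : eqType) (r : seq I) (F G : I -> seq (M * N)) :
  (forall i, i \in r -> TE (F i) (G i)) -> TE (flatten (map F r)) (flatten (map G r)).
Proof.
elim: r => [|i r IH] h /=; first exact: te_refl.
apply: te_cat; first by apply: h; rewrite inE eqxx.
by apply: IH => j jr; apply: h; rewrite inE jr orbT.
Qed.

Lemma te_map_nil I (r : seq I) (f : I -> M * N) :
  (forall i, TE [:: f i] [::]) -> TE (map f r) [::].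
Proof.
move=> h; elim: r => [|i r IH] /=; first exact: te_refl.
by rewrite -[[::]]/([::] ++ [::]); apply: (te_cat (h i) IH).
Qed.

Lemma te_split_flat (I : eqType) (r : seq I) (F G G' : I -> seq (M * N)) :
  (forall i, i \in r -> TE (F i) (G i ++ G' i)) ->
  TE (flatten (map F r)) (flatten (map G r) ++ flatten (map G' r)).
Proof.
elim: r => [|i r IH] h /=; first exact: te_refl.
apply: te_trans (_ : TE ((G i ++ G' i) ++ (flatten (map G r) ++ flatten (map G' r))) _).
  apply: te_cat; first by apply: h; rewrite inE eqxx.
  by apply: IH => j jr; apply: h; rewrite inE jr orbT.
apply: te_perm; rewrite -!catA perm_cat2l; by rewrite perm_catCA.
Qed.

Lemma te_map_nil_in (I : eqType) (r : seq I) (f : I -> M * N) :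
  (forall i, i \in r -> TE [:: f i] [::]) -> TE (map f r) [::].
Proof.
elim: r => [|i r IH] h /=; first exact: te_refl.
have h1 := h i (mem_head _ _).
have h2 : TE (map f r) [::] by apply: IH => j jr; apply: h; rewrite inE jr orbT.
exact: (te_cat h1 h2).
Qed.

Lemma te_flat_nil_in (I : eqType) (r : seq I) (F : I -> seq (M * N)) :
  (forall i, i \in r -> TE (F i) [::]) -> TE (flatten (map F r)) [::].
Proof.
elim: r => [|i r IH] h /=; first exact: te_refl.
rewrite -[[::]]/([::] ++ [::]); apply: te_cat; first by apply: h; rewrite inE eqxx.
by apply: IH => j jr; apply: h; rewrite inE jr orbT.
Qed.
End TensMore.

Section Tens3Map.
Variables (A H : comNzRingType) (s t : A -> H).
Variables (Sc' : Type) (dom' : Sc' -> Prop) (M' N' : zmodType)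
  (actM' : Sc' -> M' -> M') (actN' : Sc' -> N' -> N') (eqM' : M' -> M' -> Prop).
Local Notation TE' := (tens_eq dom' actM' actN' eqM').

Lemma t3_map (F : H * H * H -> seq (M' * N')) :
 (forall x x' y z, TE' (F (x + x', y, z)) (F (x, y, z) ++ F (x', y, z))) ->
 (forall x y y' z, TE' (F (x, y + y', z)) (F (x, y, z) ++ F (x, y', z))) ->
 (forall x y z z', TE' (F (x, y, z + z')) (F (x, y, z) ++ F (x, y, z'))) ->
 (forall y z, TE' (F (0, y, z)) [::]) ->
 (forall a x y z, TE' (F (x * t a, y, z)) (F (x, s a * y, z))) ->
 (forall a x y z, TE' (F (x, y * t a, z)) (F (x, y, s a * z))) ->
 forall l l', tens3_eq s t l l' -> TE' (flatten (map F l)) (flatten (map F l')).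
Proof.
move=> h1 h2 h3 hz hb1 hb2 l l'; elim => {l l'}.
- by move=> l; apply: te_refl.
- by move=> l l' _ h; apply: te_sym.
- by move=> l1 l2 l3 _ e1 _ e2; apply: te_trans e1 e2.
- by move=> l l' p; apply: te_perm; apply: perm_flatten; apply: perm_map.
- by move=> l1 l2 l1' l2' _ e1 _ e2; rewrite !map_cat !flatten_cat; apply: te_cat.
- by move=> *; rewrite /= !cats0; apply: h1.
- by move=> *; rewrite /= !cats0; apply: h2.
- by move=> *; rewrite /= !cats0; apply: h3.
- by move=> *; rewrite /= !cats0; apply: hz.
- by move=> *; rewrite /= !cats0; apply: hb1.
- by move=> *; rewrite /= !cats0; apply: hb2.
Qed.
End Tens3Map.

Section SeqLemmas.
Lemma flatten_map_flatten (T U : Type) (F : T -> seq U) (ss : seq (seq T)) :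
  flatten (map F (flatten ss)) = flatten (map (fun s => flatten (map F s)) ss).
Proof. by elim: ss => //= s ss IH; rewrite map_cat flatten_cat IH. Qed.

Lemma flatten_map_map (T T' U : Type) (F : T' -> seq U) (g : T -> T') l :
  flatten (map F (map g l)) = flatten (map (fun x => F (g x)) l).
Proof. by rewrite -map_comp. Qed.

Lemma map_flatten_map (T U V : Type) (f : U -> V) (G : T -> seq U) l :
  map f (flatten (map G l)) = flatten (map (fun x => map f (G x)) l).
Proof. by elim: l => //= x l IH; rewrite map_cat IH. Qed.

Lemma perm_flat (T : eqType) (U : eqType) (F G : T -> seq U) (l : seq T) :
  (forall x, x \in l -> perm_eq (F x) (G x)) ->
  perm_eq (flatten (map F l)) (flatten (map G l)).
Proof.
elim: l => //= x l IH h; apply: perm_cat; first by apply: h; rewrite inE eqxx.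
by apply: IH => y yl; apply: h; rewrite inE yl orbT.
Qed.

Lemma perm_swap2 (T1 T2 R : eqType) (Y : T1 -> T2 -> seq R) (s : seq T1) (t : seq T2) :
  perm_eq (flatten [seq flatten [seq Y x y | y <- t] | x <- s])
          (flatten [seq flatten [seq Y x y | x <- s] | y <- t]).
Proof.
apply/permP => a.
rewrite -!sum1_count !(big_mkcond a) !big_flatten /= !big_map.
under eq_bigr do rewrite big_flatten /= big_map.
under [RHS]eq_bigr do rewrite big_flatten /= big_map.
by rewrite exchange_big.
Qed.
End SeqLemmas.
Local Open Scope quotient_scope.


Section Quot.
Variables (V : zmodType) (P : V -> Prop).
Hypotheses (P0 : P 0) (PB : forall x y, P x -> P y -> P (x - y)).
Definition Pb : {pred V} := fun x => if excluded_middle_informative (P x) then true else false.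
Lemma PbE x : (x \in Pb) <-> P x.
Proof.
rewrite /Pb unfold_in /=; case: excluded_middle_informative => //.
Qed.
Lemma Pb_zmod : zmod_closed Pb.
Proof.
split; first by apply/PbE.
by move=> x y /PbE hx /PbE hy; apply/PbE; apply: PB.
Qed.
HB.instance Definition _ := GRing.isZmodClosed.Build V Pb Pb_zmod.
Definition Qt := Quotient.quot Pb.
Definition piQ : V -> Qt := \pi_Qt.
Lemma piQ_eq x y : piQ x = piQ y <-> P (x - y).
Proof.
rewrite /piQ; split.
  by move=> /eqP; rewrite -Quotient.idealrBE => /PbE.
by move=> h; apply/eqP; rewrite -Quotient.idealrBE; apply/PbE.
Qed.
Lemma piQD x y : piQ (x + y) = piQ x + piQ y.
Proof. by rewrite /piQ raddfD. Qed.
Lemma piQ0 : piQ 0 = 0.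
Proof. by rewrite /piQ raddf0. Qed.
Lemma piQ_repr q : piQ (repr q) = q.
Proof. exact: reprK. Qed.
Lemma piQ_sum I (r : seq I) F : piQ (\sum_(i <- r) F i) = \sum_(i <- r) piQ (F i).
Proof. by rewrite /piQ raddf_sum. Qed.
End Quot.

Local Close Scope quotient_scope.

Section TensMap1.
Variables (Sc : Type) (dom : Sc -> Prop) (M N : zmodType)
  (actM : Sc -> M -> M) (actN : Sc -> N -> N) (eqM : M -> M -> Prop).
Variables (Sc' : Type) (dom' : Sc' -> Prop) (M' N' : zmodType)
  (actM' : Sc' -> M' -> M') (actN' : Sc' -> N' -> N') (eqM' : M' -> M' -> Prop).
Local Notation TE := (tens_eq dom actM actN eqM).
Local Notation TE' := (tens_eq dom' actM' actN' eqM').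

Lemma te_map1 (f : M * N -> M' * N') :
 (forall m m' n, TE' [:: f (m + m', n)] [:: f (m, n); f (m', n)]) ->
 (forall m n n', TE' [:: f (m, n + n')] [:: f (m, n); f (m, n')]) ->
 (forall n, TE' [:: f (0, n)] [::]) ->
 (forall a m n, dom a -> TE' [:: f (actM a m, n)] [:: f (m, actN a n)]) ->
 (forall m m' n, eqM m m' -> TE' [:: f (m, n)] [:: f (m', n)]) ->
 forall l l', TE l l' -> TE' (map f l) (map f l').
Proof.
move=> h1 h2 h3 h4 h5 l l' e.
rewrite (mapE1 f l) (mapE1 f l').
by apply: (te_map (F := fun x => [:: f x])) e.
Qed.
End TensMap1.

Section Hopf.
Variables (k : fieldType) (A H : comAlgType k) (s t : {lrmorphism A -> H})
  (eps : {lrmorphism H -> A}) (Delta : H -> seq (H * H))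
  (S : {lrmorphism H -> H}) (K : H -> Prop).
Hypothesis HA : hopf_algebroid s t eps Delta S.
Hypothesis HK : sub_hopf_algebroid s t Delta S K.

Local Notation HT := (hteq s t).
Local Notation BT := (barteq s t).
Local Notation I := (HKplus eps K).

Lemma DeltaD x y : HT (Delta (x + y)) (Delta x ++ Delta y).
Proof. by case: HA => [[h _] _]; apply: h. Qed.
Lemma DeltaZ c x : HT (Delta (c *: x)) [seq (c *: p.1, p.2) | p <- Delta x].
Proof. by case: HA => [[_ [h _]] _]; apply: h. Qed.
Lemma Delta1 : HT (Delta 1) [:: (1, 1)].
Proof. by case: HA => [[_ [_ [h _]]] _]. Qed.
Lemma DeltaM x y : HT (Delta (x * y))
      [seq (p.1 * q.1, p.2 * q.2) | p <- Delta x, q <- Delta y].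
Proof. by case: HA => [[_ [_ [_ h]]] _]; apply: h. Qed.
Lemma DeltaSl a x : HT (Delta (s a * x)) [seq (s a * p.1, p.2) | p <- Delta x].
Proof. by case: HA => [_ [[h _] _]]; apply: h. Qed.
Lemma DeltaTr a x : HT (Delta (x * t a)) [seq (p.1, p.2 * t a) | p <- Delta x].
Proof. by case: HA => [_ [[_ [h _]] _]]; apply: h. Qed.
Lemma eps_s a : eps (s a) = a.
Proof. by case: HA => [_ [[_ [_ [h _]]] _]]; apply: h. Qed.
Lemma eps_t a : eps (t a) = a.
Proof. by case: HA => [_ [[_ [_ [_ [h _]]]] _]]; apply: h. Qed.
Lemma coass x : tens3_eq s t
      [seq (q.1, q.2, p.2) | p <- Delta x, q <- Delta p.1]
      [seq (p.1, q.1, q.2) | p <- Delta x, q <- Delta p.2].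
Proof. by case: HA => [_ [[_ [_ [_ [_ [h _]]]]] _]]; apply: h. Qed.
Lemma counitL x : \sum_(p <- Delta x) s (eps p.1) * p.2 = x.
Proof. by case: HA => [_ [[_ [_ [_ [_ [_ [h _]]]]]] _]]; apply: h. Qed.
Lemma counitR x : \sum_(p <- Delta x) p.1 * t (eps p.2) = x.
Proof. by case: HA => [_ [[_ [_ [_ [_ [_ [_ h]]]]]] _]]; apply: h. Qed.
Lemma S_s a : S (s a) = t a.
Proof. by case: HA => [_ [_ [h _]]]; apply: h. Qed.
Lemma S_t a : S (t a) = s a.
Proof. by case: HA => [_ [_ [_ [h _]]]]; apply: h. Qed.
Lemma antiL x : \sum_(p <- Delta x) S p.1 * p.2 = t (eps x).
Proof. by case: HA => [_ [_ [_ [_ [_ [h _]]]]]]; apply: h. Qed.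
Lemma antiR x : \sum_(p <- Delta x) p.1 * S p.2 = s (eps x).
Proof. by case: HA => [_ [_ [_ [_ [_ [_ h]]]]]]; apply: h. Qed.

Lemma Ks a : K (s a). Proof. by have [h _ _ _ _] := HK; case: (h a). Qed.
Lemma Kt a : K (t a). Proof. by have [h _ _ _ _] := HK; case: (h a). Qed.
Lemma KD x y : K x -> K y -> K (x + y). Proof. by have [_ h _ _ _] := HK; apply: h. Qed.
Lemma KN x : K x -> K (- x). Proof. by have [_ _ h _ _] := HK; apply: h. Qed.
Lemma KM x y : K x -> K y -> K (x * y). Proof. by have [_ _ _ h _] := HK; apply: h. Qed.
Lemma KS x : K x -> K (S x). Proof. by have [_ _ _ _ [_ h _]] := HK; apply: h. Qed.
Lemma KDelta x : K x -> exists l : seq (H * H),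
   (forall p, p \in l -> K p.1 /\ K p.2) /\ HT l (Delta x).
Proof. by have [_ _ _ _ [_ _ h]] := HK; apply: h. Qed.
Lemma K0 : K 0. Proof. by have := Ks 0; rewrite rmorph0. Qed.
Lemma K1 : K 1. Proof. by have := Ks 1; rewrite rmorph1. Qed.
Lemma KB x y : K x -> K y -> K (x - y). Proof. by move=> *; apply: KD => //; apply: KN. Qed.

Lemma epsS x : eps (S x) = eps x.
Proof.
rewrite -{1}(counitR x) !rmorph_sum /=.
under eq_bigr do rewrite !rmorphM /= S_t eps_s.
by rewrite -[RHS](eps_t (eps x)) -antiL rmorph_sum; apply: eq_bigr => p _; rewrite rmorphM.
Qed.

Lemma HTbal a x y : HT [:: (x * t a, y)] [:: (x, s a * y)].
Proof. by apply: (@TEbal _ (fun _ : A => True)). Qed.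

Lemma Delta0 : HT (Delta 0) [::].
Proof.
have := DeltaZ 0 0; rewrite scale0r => h; apply: te_trans h _.
apply: te_map_nil => p; rewrite scale0r; exact: TEzero.
Qed.

Lemma Delta_sum (J : Type) (r : seq J) (F : J -> H) :
  HT (Delta (\sum_(j <- r) F j)) (flatten (map (fun j => Delta (F j)) r)).
Proof.
elim: r => [|j r IH]; first by rewrite big_nil; exact: Delta0.
rewrite big_cons /=; apply: te_trans (DeltaD _ _) _; exact: te_catl.
Qed.

Definition prodL (L1 L2 : seq (H * H)) :=
  [seq (p.1 * q.1, p.2 * q.2) | p <- L1, q <- L2].

Lemma mul_wd u v L L' : HT L L' ->
  HT [seq (u * q.1, v * q.2) | q <- L] [seq (u * q.1, v * q.2) | q <- L'].
Proof.
apply: (te_map1 (f := fun q : H * H => (u * q.1, v * q.2))) => /=.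
- by move=> m m' n; rewrite mulrDr; apply: TEaddl.
- by move=> m n n'; rewrite mulrDr; apply: TEaddr.
- by move=> n; rewrite mulr0; apply: TEzero.
- by move=> a m n _; rewrite mulrA mulrCA; apply: HTbal.
- by move=> m m' n ->; apply: te_refl.
Qed.

Lemma prod_wd_r L1 L2 L2' : HT L2 L2' -> HT (prodL L1 L2) (prodL L1 L2').
Proof. by move=> e; apply: te_flat => p; apply: mul_wd. Qed.

Lemma prod_wd_l L1 L1' L2 : HT L1 L1' -> HT (prodL L1 L2) (prodL L1' L2).
Proof.
apply: (te_map (F := fun p : H * H => [seq (p.1 * q.1, p.2 * q.2) | q <- L2])) => /=.
- by move=> m m' n; apply: te_split => q; rewrite mulrDl; apply: TEaddl.
- by move=> m n n'; apply: te_split => q; rewrite mulrDl; apply: TEaddr.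
- by move=> n; apply: te_map_nil => q; rewrite mul0r; apply: TEzero.
- move=> a m n _; apply: te_mapP => q /=.
  by rewrite mulrAC -[(s a * n) * _]mulrA; apply: HTbal.
- by move=> m m' n ->; apply: te_refl.
Qed.

Lemma prod_wd L1 L1' L2 L2' : HT L1 L1' -> HT L2 L2' ->
  HT (prodL L1 L2) (prodL L1' L2').
Proof.
by move=> e1 e2; apply: te_trans (prod_wd_l _ e1) _; apply: prod_wd_r.
Qed.

Lemma st_gen a : st_ideal s t (s a - t a).
Proof. by apply: ig_gen; exists a. Qed.

Lemma BTbal a x y : BT [:: (x * s a, y)] [:: (x, s a * y)].
Proof. by apply: (@TEbal _ (fun _ : A => True)). Qed.

Lemma BTeq x x' y : st_ideal s t (x - x') -> BT [:: (x, y)] [:: (x', y)].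
Proof. by move=> h; apply: (@TEeqM _ (fun _ : A => True)). Qed.

Lemma st_ts x a : st_ideal s t (x * t a - x * s a).
Proof. by rewrite -mulrBr; apply: igM; rewrite -opprB; apply: igN; apply: st_gen. Qed.

Lemma adI_wd w L L' : HT L L' ->
  BT [seq (q.2, S q.1 * w) | q <- L] [seq (q.2, S q.1 * w) | q <- L'].
Proof.
apply: (te_map1 (f := fun q : H * H => (q.2, S q.1 * w))) => /=.
- by move=> m m' n; rewrite rmorphD mulrDl; apply: TEaddr.
- by move=> m n n'; apply: TEaddl.
- by move=> n; rewrite rmorph0 mul0r; apply: te_zero_r.
- move=> a m n _; rewrite rmorphM /= S_t.
  have -> : S m * s a * w = s a * (S m * w) by rewrite mulrAC mulrC.
  by apply: te_sym; rewrite [s a * n]mulrC; apply: BTbal.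
- by move=> m m' n ->; apply: te_refl.
Qed.

Definition adF (p : H * H) := [seq (q.2, S q.1 * p.2) | q <- Delta p.1].
Definition adL (L : seq (H * H)) := flatten (map adF L).

Lemma adL_wd L L' : HT L L' -> BT (adL L) (adL L').
Proof.
apply: (te_map (F := adF)) => /=.
- move=> m m' n; rewrite /adF /= -map_cat; apply: adI_wd; exact: DeltaD.
- by move=> m n n'; apply: te_split => q; rewrite mulrDr; apply: TEaddr.
- move=> n; rewrite /adF /=; apply: te_trans (adI_wd _ Delta0) _; exact: te_refl.
- move=> a m n _; rewrite /adF /=.
  apply: te_trans (adI_wd _ (DeltaTr a m)) _; rewrite -map_comp.
  apply: te_mapP => q /=.
  apply: te_trans (BTeq _ (st_ts _ _)) _.
  by rewrite mulrCA; apply: BTbal.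
- by move=> m m' n ->; apply: te_refl.
Qed.

Lemma bmul_wd u v L L' : BT L L' ->
  BT [seq (u * q.1, v * q.2) | q <- L] [seq (u * q.1, v * q.2) | q <- L'].
Proof.
apply: (te_map1 (f := fun q : H * H => (u * q.1, v * q.2))) => /=.
- by move=> m m' n; rewrite mulrDr; apply: TEaddl.
- by move=> m n n'; rewrite mulrDr; apply: TEaddr.
- by move=> n; rewrite mulr0; apply: TEzero.
- by move=> a m n _; rewrite mulrA mulrCA; apply: BTbal.
- by move=> m m' n e; apply: BTeq; rewrite -mulrBr; apply: igM.
Qed.

Lemma bprod_wd_r L1 L2 L2' : BT L2 L2' -> BT (prodL L1 L2) (prodL L1 L2').
Proof. by move=> e; apply: te_flat => p; apply: bmul_wd. Qed.

Lemma adL_prod L1 L2 : BT (adL (prodL L1 L2)) (prodL (adL L1) (adL L2)).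
Proof.
pose W' (p q u v : H * H) := (u.2 * v.2, S u.1 * p.2 * (S v.1 * q.2)).
have E1 : adL (prodL L1 L2) =
   flatten [seq flatten [seq adF (p.1 * q.1, p.2 * q.2) | q <- L2] | p <- L1].
  rewrite /adL /prodL flatten_map_flatten flatten_map_map.
  by congr flatten; apply: eq_map => p /=; rewrite flatten_map_map.
have E2 : prodL (adL L1) (adL L2) = flatten [seq flatten [seq flatten
     [seq [seq W' p q u v | v <- Delta q.1] | q <- L2] | u <- Delta p.1] | p <- L1].
  rewrite /prodL /adL flatten_map_flatten flatten_map_map.
  congr flatten; apply: eq_map => p /=; rewrite /adF flatten_map_map.
  congr flatten; apply: eq_map => u /=; rewrite map_flatten_map.
  congr flatten; apply: eq_map => q /=; rewrite -map_comp.
  by apply: eq_map => v.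
rewrite E1 E2.
apply: te_trans (_ : BT _ (flatten [seq flatten [seq flatten
     [seq [seq W' p q u v | v <- Delta q.1] | u <- Delta p.1] | q <- L2] | p <- L1])) _.
  apply: te_flat => p; apply: te_flat => q.
  rewrite /adF /=; apply: te_trans (adI_wd _ (DeltaM p.1 q.1)) _.
  rewrite /prodL map_flatten_map.
  match goal with |- tens_eq _ _ _ _ ?X ?Y => suff ->: X = Y by apply: te_refl end.
  congr flatten; apply: eq_map => u; rewrite -map_comp; apply: eq_map => v /=.
  by rewrite /W' rmorphM /= mulrACA.
apply: te_perm; apply: perm_flat => p _.
exact: (perm_swap2 (fun q u => [seq W' p q u v | v <- Delta q.1])).
Qed.

Lemma I_gen y : K y -> eps y = 0 -> I y.
Proof. by move=> Ky ey; apply: ig_gen. Qed.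

Lemma sum_SK q (Lq : seq (H * H)) : HT Lq (Delta q.1) ->
  \sum_(v <- Lq) s (eps v.2) * (S v.1 * q.2) = S q.1 * q.2.
Proof.
move=> e.
have E := te_sum (f := fun m n => S (m * t (eps n)) * q.2) _ _ _ _ e.
rewrite /= in E.
transitivity (\sum_(v <- Lq) S (v.1 * t (eps v.2)) * q.2).
  by apply: eq_bigr => v _; rewrite rmorphM /= S_t mulrA [s _ * _]mulrC.
rewrite E; last 4 first.
- by move=> m m' n; rewrite mulrDl rmorphD mulrDl.
- by move=> m n n'; rewrite !rmorphD mulrDr rmorphD mulrDl.
- by move=> a m n _; rewrite [eps (s a * n)]rmorphM /= eps_s [t (a * _)]rmorphM mulrA.
- by move=> m m' n ->.
by rewrite -big_distrl -rmorph_sum counitR.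
Qed.

Lemma adF_K q : K q.1 -> exists D : seq (H * H),
  (forall b, b \in D -> I b.1) /\ BT (adF q) (D ++ [:: (1, S q.1 * q.2)]).
Proof.
move=> Kq; have [Lq [hK e]] := KDelta Kq.
pose g := fun v : H * H => (v.2 - s (eps v.2), S v.1 * q.2).
pose g' := fun v : H * H => (s (eps v.2), S v.1 * q.2).
exists (map g Lq); split.
  move=> b /mapP [v vin ->] /=; apply: I_gen.
    by apply: KB; [exact: (hK v vin).2 | exact: Ks].
  by rewrite rmorphB /= eps_s subrr.
apply: te_trans (adI_wd _ (te_sym e)) _.
apply: te_trans (_ : BT _ (map g Lq ++ map g' Lq)) _.
  apply: te_split => v; rewrite /g /g' -{1}(subrK (s (eps v.2)) v.2).
  exact: TEaddl.
apply: te_catl.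
apply: te_trans (_ : BT _ [seq (1, s (eps v.2) * (S v.1 * q.2)) | v <- Lq]) _.
  by apply: te_mapP => v; rewrite /g' -{1}[s _]mul1r; apply: BTbal.
apply: te_trans (te_sym (te_collect_r _ _ _ _ Lq
   (fun v => s (eps v.2) * (S v.1 * q.2)) 1)) _.
rewrite sum_SK //; exact: te_refl.
Qed.

Lemma adL_K L : (forall q, q \in L -> K q.1) -> exists D : seq (H * H),
  (forall b, b \in D -> I b.1) /\
  BT (adL L) (D ++ [:: (1, \sum_(q <- L) S q.1 * q.2)]).
Proof.
elim: L => [|q L IH] hL.
  exists [::]; split => //; rewrite big_nil /=; apply: te_sym; exact: te_zero_r.
have [Dq [hDq eq]] := adF_K (hL q (mem_head _ _)).
have [D [hD eD]] : exists D : seq (H * H),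
  (forall b, b \in D -> I b.1) /\
  BT (adL L) (D ++ [:: (1, \sum_(q <- L) S q.1 * q.2)]).
  by apply: IH => r rL; apply: hL; rewrite inE rL orbT.
exists (Dq ++ D); split.
  by move=> b; rewrite mem_cat => /orP [] ?; [apply: hDq | apply: hD].
rewrite /adL /= -/(adL L).
apply: te_trans (te_cat eq eD) _.
apply: te_trans (_ : BT _ ((Dq ++ D) ++ [:: (1, S q.1 * q.2); (1, \sum_(q <- L) S q.1 * q.2)])) _.
  apply: te_perm; apply/permP => c; rewrite !count_cat /=; lia.
rewrite big_cons; apply: te_catl; apply: te_sym; exact: TEaddr.
Qed.

Lemma adT h y : K y -> eps y = 0 -> exists l : seq (H * H),
  (forall b, b \in l -> I b.1) /\ BT l (adL (Delta (h * y))).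
Proof.
move=> Ky ey; have [Ly [hK e]] := KDelta Ky.
have [D [hD eD]] := adL_K (L := Ly) (fun q qin => (hK q qin).1).
have Hs : \sum_(q <- Ly) S q.1 * q.2 = 0.
  rewrite (te_sum (f := fun m n => S m * n) _ _ _ _ e) /=.
    by rewrite antiL ey rmorph0.
  - by move=> m m' n; rewrite rmorphD mulrDl.
  - by move=> m n n'; rewrite mulrDr.
  - by move=> a m n _; rewrite rmorphM /= S_t mulrA.
  - by move=> m m' n ->.
rewrite Hs in eD.
exists (prodL (adL (Delta h)) D); split.
  move=> b /allpairsP [[a d] [_ din ->]] /=; apply: igM; exact: hD.
apply: te_sym.
apply: te_trans (adL_wd (DeltaM h y)) _.
apply: te_trans (adL_prod _ _) _.
apply: bprod_wd_r.
apply: te_trans (adL_wd (te_sym e)) _.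
apply: te_trans eD _.
rewrite -{2}(cats0 D); apply: te_catl; exact: te_zero_r.
Qed.

Lemma normal3 x : I x -> exists l : seq (H * H),
  (forall p, p \in l -> I p.1) /\
  BT l [seq (q.2, S q.1 * p.2) | p <- Delta x, q <- Delta p.1].
Proof.
move=> [lx [hlx ->]].
suff [l [hl el]] : exists l : seq (H * H), (forall p, p \in l -> I p.1) /\
    BT l (flatten (map (fun p => adL (Delta (p.1 * p.2))) lx)).
  exists l; split => //; apply: te_trans el _; apply: te_sym.
  apply: te_trans (adL_wd (Delta_sum _ _)) _.
  rewrite /adL flatten_map_flatten flatten_map_map; exact: te_refl.
elim: lx hlx => [|p lx IH] h.
  by exists [::]; split => //; exact: te_refl.
have [hp1 hp2] := h p (mem_head _ _).
have [l1 [h1 e1]] := adT p.1 hp1 hp2.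
have [l2 [h2 e2]] : exists l : seq (H * H), (forall p, p \in l -> I p.1) /\
    BT l (flatten (map (fun p => adL (Delta (p.1 * p.2))) lx)).
  by apply: IH => r rl; apply: h; rewrite inE rl orbT.
exists (l1 ++ l2); split; last exact: te_cat.
by move=> b; rewrite mem_cat => /orP [] ?; [apply: h1 | apply: h2].
Qed.

Lemma I_ideal : is_ideal I.
Proof.
split; first exact: ig0.
  by move=> x y; apply: igD.
by move=> h x; apply: igM.
Qed.

Lemma I_eps x : I x -> eps x = 0.
Proof.
move=> [l [hl ->]]; rewrite rmorph_sum big_seq big1 // => p pin.
by rewrite rmorphM /= (hl p pin).2 mulr0.
Qed.

Lemma I_S x : I x -> I (S x).
Proof.
move=> [l [hl ->]]; rewrite rmorph_sum; apply: ig_sum => p pin.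
rewrite rmorphM; apply: igM; have [Kp ep] := hl p pin.
by apply: I_gen; [exact: KS | rewrite epsS].
Qed.

Lemma st_I x : st_ideal s t x -> I x.
Proof.
move=> [l [hl ->]]; exists l; split => // p pin; have [a ->] := hl p pin.
split; first by apply: KB; [exact: Ks | exact: Kt].
by rewrite rmorphB /= eps_s eps_t subrr.
Qed.

Lemma DeltaT h y : K y -> eps y = 0 -> exists l : seq (H * H),
  (forall p, p \in l -> I p.1 \/ I p.2) /\ HT l (Delta (h * y)).
Proof.
move=> Ky ey; have [Ly [hK e]] := KDelta Ky.
pose g := fun v : H * H => (v.1, v.2 - s (eps v.2)).
pose g' := fun v : H * H => (v.1, s (eps v.2)).
have E : HT Ly (map g Ly ++ [:: (y, 1)]).
  apply: te_trans (_ : HT _ (map g Ly ++ map g' Ly)) _.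
    rewrite -{1}[Ly]map_id; apply: te_split => -[v1 v2].
    rewrite /g /g' /= -{1}(subrK (s (eps v2)) v2); exact: TEaddr.
  apply: te_catl.
  apply: te_trans (_ : HT _ [seq (v.1 * t (eps v.2), 1) | v <- Ly]) _.
    apply: te_mapP => v; rewrite /g' -{1}[s _]mulr1; apply: te_sym; exact: HTbal.
  apply: te_trans (te_sym (te_collect_l _ _ _ _ Ly
     (fun v => v.1 * t (eps v.2)) 1)) _.
  rewrite (te_sum (f := fun m n => m * t (eps n)) _ _ _ _ e) /= ?counitR.
  - exact: te_refl.
  - by move=> m m' n; rewrite mulrDl.
  - by move=> m n n'; rewrite !rmorphD mulrDr.
  - by move=> a m n _; rewrite [eps (s a * n)]rmorphM /= eps_s [t (a * _)]rmorphM mulrA.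
  - by move=> m m' n ->.
exists (prodL (Delta h) (map g Ly ++ [:: (y, 1)])); split.
  move=> b /allpairsP [[a d] [_ /= din ->]] /=.
  move: din; rewrite mem_cat => /orP [/mapP [v vin ->] | ].
    right; apply: igM; apply: I_gen.
      by apply: KB; [exact: (hK v vin).2 | exact: Ks].
    by rewrite rmorphB /= eps_s subrr.
  by rewrite inE => /eqP -> /=; left; apply: igM; exact: I_gen.
apply: te_sym; apply: te_trans (DeltaM h y) _.
apply: prod_wd_r; apply: te_trans (te_sym e) E.
Qed.

Lemma I_Delta x : I x -> exists l : seq (H * H),
  (forall p, p \in l -> I p.1 \/ I p.2) /\ HT l (Delta x).
Proof.
move=> [lx [hlx ->]].
suff [l [hl el]] : exists l : seq (H * H), (forall p, p \in l -> I p.1 \/ I p.2) /\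
    HT l (flatten (map (fun p => Delta (p.1 * p.2)) lx)).
  exists l; split => //; apply: te_trans el _; apply: te_sym; exact: Delta_sum.
elim: lx hlx => [|p lx IH] h.
  by exists [::]; split => //; exact: te_refl.
have [hp1 hp2] := h p (mem_head _ _).
have [l1 [h1 e1]] := DeltaT p.1 hp1 hp2.
have [l2 [h2 e2]] : exists l : seq (H * H), (forall p, p \in l -> I p.1 \/ I p.2) /\
    HT l (flatten (map (fun p => Delta (p.1 * p.2)) lx)).
  by apply: IH => r rl; apply: h; rewrite inE rl orbT.
exists (l1 ++ l2); split; last exact: te_cat.
by move=> b; rewrite mem_cat => /orP [] ?; [apply: h1 | apply: h2].
Qed.

Lemma normal_I : normal_hopf_ideal s t eps Delta S I.
Proof.
split; last exact: normal3.
  split; [exact: I_ideal | exact: I_eps | exact: I_Delta | exact: I_S].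
exact: st_I.
Qed.

Local Notation CT := (tens_eq (fun _ : A => True) (fun a (y : H) => y * t a)
    (fun a (z : H) => s a * z) (fun y z => I (y - z))).

Lemma HT_CT l l' : HT l l' -> CT l l'.
Proof.
elim => {l l'}.
- by move=> l; apply: te_refl.
- by move=> l l' _ h; apply: te_sym.
- by move=> l1 l2 l3 _ h1 _ h2; apply: te_trans h1 h2.
- by move=> l l' p; apply: te_perm.
- by move=> l1 l2 l1' l2' _ h1 _ h2; apply: te_cat.
- by move=> *; apply: TEaddl.
- by move=> *; apply: TEaddr.
- by move=> *; apply: TEzero.
- by move=> a m n _; apply: (@TEbal _ (fun _ : A => True)).
- by move=> m m' n ->; apply: te_refl.
Qed.

Lemma K_coinv x : K x -> coinv s t Delta I x.
Proof.
move=> Kx; have [Lx [hK e]] := KDelta Kx.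
rewrite /coinv; apply: te_trans (HT_CT (te_sym e)) _.
pose g := fun v : H * H => (v.1 - s (eps v.1), v.2).
pose g' := fun v : H * H => (s (eps v.1), v.2).
apply: te_trans (_ : CT _ (map g Lx ++ map g' Lx)) _.
  rewrite -{1}[Lx]map_id; apply: te_split => -[v1 v2].
  rewrite /g /g' /= -{1}(subrK (s (eps v1)) v1); exact: TEaddl.
rewrite -[[:: (1, x)]]/([::] ++ [:: (1, x)]); apply: te_cat.
  apply: te_map_nil_in => v vin; rewrite /g /=.
  apply: te_trans (_ : CT _ [:: (0, v.2)]) _; last exact: TEzero.
  apply: TEeqM; rewrite subr0; apply: I_gen.
    by apply: KB; [exact: (hK v vin).1 | exact: Ks].
  by rewrite rmorphB /= eps_s subrr.
apply: te_trans (_ : CT _ [seq (1, s (eps v.1) * v.2) | v <- Lx]) _.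
  apply: te_mapP => v; rewrite /g'.
  apply: te_trans (_ : CT _ [:: (1 * t (eps v.1), v.2)]) _.
    apply: TEeqM; rewrite mul1r; apply: st_I; exact: st_gen.
  by apply: (@TEbal _ (fun _ : A => True)).
apply: te_trans (te_sym (te_collect_r _ _ _ _ Lx (fun v => s (eps v.1) * v.2) 1)) _.
rewrite (te_sum (f := fun m n => s (eps m) * n) _ _ _ _ e) /= ?counitL.
- exact: te_refl.
- by move=> m m' n; rewrite !rmorphD mulrDl.
- by move=> m n n'; rewrite mulrDr.
- by move=> a m n _; rewrite [eps (m * t a)]rmorphM /= eps_t rmorphM mulrA.
- by move=> m m' n ->.
Qed.

Hypothesis HP : pure_over K.

Local Notation Q := (Qt K0 KB).
Local Notation pi := (piQ K0 KB).
Definition actQ (b : H) (q : Q) : Q := pi (b * repr q).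
Local Notation PT := (tens_eq K actQ (fun b (h : H) => b * h) (@eq Q)).

Lemma actQ_pi b m : K b -> actQ b (pi m) = pi (b * m).
Proof.
move=> Kb; apply/(piQ_eq K0 KB); rewrite -mulrBr; apply: KM => //.
by apply/(piQ_eq K0 KB); rewrite piQ_repr.
Qed.

Lemma pi1 : pi 1 = 0.
Proof. by rewrite -(piQ0 K0 KB); apply/(piQ_eq K0 KB); rewrite subr0; exact: K1. Qed.

Lemma modQ : module_over K actQ.
Proof.
split.
- move=> b q q' Kb; rewrite -[q]piQ_repr -[q']piQ_repr -piQD !actQ_pi //.
  by rewrite mulrDr piQD.
- move=> b b' q Kb Kb'; rewrite -[q]piQ_repr !actQ_pi //; last exact: KD.
  by rewrite mulrDl piQD.
- move=> b b' q Kb Kb'; rewrite -[q]piQ_repr !actQ_pi //; last exact: KM.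
  by rewrite mulrA.
- by move=> q; rewrite -[q]piQ_repr actQ_pi ?mul1r //; exact: K1.
Qed.

Lemma PTbal b m n : K b -> PT [:: (pi (m * b), n)] [:: (pi m, b * n)].
Proof. by move=> Kb; rewrite mulrC -actQ_pi //; apply: (@TEbal _ K). Qed.

Lemma gI_wd w L L' : HT L L' ->
  PT [seq (pi q.1, S q.2 * w) | q <- L] [seq (pi q.1, S q.2 * w) | q <- L'].
Proof.
apply: (te_map1 (f := fun q : H * H => (pi q.1, S q.2 * w))) => /=.
- by move=> m m' n; rewrite piQD; apply: TEaddl.
- by move=> m n n'; rewrite rmorphD mulrDl; apply: TEaddr.
- by move=> n; rewrite piQ0; apply: TEzero.
- move=> a m n _; rewrite rmorphM /= S_s.
  have -> : t a * S n * w = t a * (S n * w) by rewrite mulrA.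
  by apply: PTbal; exact: Kt.
- by move=> m m' n ->; apply: te_refl.
Qed.

Definition gF (p : H * H) := [seq (pi q.1, S q.2 * p.2) | q <- Delta p.1].

Lemma gF_I g n : I g -> PT (gF (g, n)) [::].
Proof.
move=> [lg [hlg ->]]; rewrite /gF /=.
apply: te_trans (gI_wd n (Delta_sum lg (fun p => p.1 * p.2))) _.
rewrite map_flatten_map; apply: te_flat_nil_in => p pin.
have [Kp ep] := hlg p pin.
have [Ly [hK e]] := KDelta Kp.
apply: te_trans (gI_wd n (DeltaM p.1 p.2)) _.
apply: te_trans (gI_wd n (prod_wd_r (Delta p.1) (te_sym e))) _.
rewrite /prodL map_flatten_map; apply: te_flat_nil => u.
rewrite -map_comp.
apply: te_trans (_ : PT _ [seq (pi u.1, v.1 * S v.2 * (S u.2 * n)) | v <- Ly]) _.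
  apply: te_mapP_in => v vin /=.
  have -> : v.1 * S v.2 * (S u.2 * n) = v.1 * (S (u.2 * v.2) * n).
    by rewrite rmorphM /=; ring.
  by apply: PTbal; exact: (hK v vin).1.
apply: te_trans (te_sym (te_collect_r _ _ _ _ Ly
   (fun v => v.1 * S v.2 * (S u.2 * n)) (pi u.1))) _.
rewrite -big_distrl /= (te_sum (f := fun m n => m * S n) _ _ _ _ e) /=.
- by rewrite antiR ep rmorph0 mul0r; exact: te_zero_r.
- by move=> m m' n'; rewrite mulrDl.
- by move=> m n1 n2; rewrite rmorphD mulrDr.
- by move=> a m n1 _; rewrite rmorphM /= S_s mulrA.
- by move=> m m' n1 ->.
Qed.

Lemma gF_D m m' n : PT (gF (m + m', n)) (gF (m, n) ++ gF (m', n)).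
Proof. by rewrite /gF /= -map_cat; apply: gI_wd; exact: DeltaD. Qed.

Lemma gF_wd l l' : CT l l' -> PT (flatten (map gF l)) (flatten (map gF l')).
Proof.
apply: (te_map (F := gF)) => /=.
- exact: gF_D.
- by move=> m n n'; apply: te_split => q; rewrite mulrDr; apply: TEaddr.
- by move=> n; rewrite /gF /=; apply: te_trans (gI_wd _ Delta0) _; exact: te_refl.
- move=> a m n _; rewrite /gF /=.
  apply: te_trans (gI_wd _ (DeltaTr a m)) _; rewrite -map_comp.
  apply: te_mapP => q /=; rewrite rmorphM /= S_t -mulrA; exact: te_refl.
- move=> m m' n e.
  have := gF_D (m - m') m' n; rewrite subrK => h; apply: te_trans h _.
  rewrite -[X in tens_eq _ _ _ _ _ X]cat0s; apply: te_catr; exact: gF_I.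
Qed.

Lemma coinv_K x : coinv s t Delta I x -> K x.
Proof.
move=> cx; have E := gF_wd cx; rewrite /= cats0 in E.
have E1 : PT (gF (1, x)) [::].
  rewrite /gF /=; apply: te_trans (gI_wd _ Delta1) _.
  by rewrite /= pi1; exact: TEzero.
pose F3 := fun r : H * H * H => [:: (pi r.1.1, S r.1.2 * r.2)].
have E2 := t3_map (F := F3) _ _ _ _ _ _ (coass x).
have E3 : PT (flatten (map F3 [seq (q.1, q.2, p.2) | p <- Delta x, q <- Delta p.1]))
             (flatten (map F3 [seq (p.1, q.1, q.2) | p <- Delta x, q <- Delta p.2])).
  apply: E2 => /=.
  - by move=> a a' b c; rewrite /F3 /= piQD; apply: TEaddl.
  - by move=> a b b' c; rewrite /F3 /= rmorphD mulrDl; apply: TEaddr.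
  - by move=> a b c c'; rewrite /F3 /= mulrDr; apply: TEaddr.
  - by move=> b c; rewrite /F3 /= piQ0; apply: TEzero.
  - move=> a a' b c; rewrite /F3 /= rmorphM /= S_s -mulrA; apply: PTbal; exact: Kt.
  - by move=> a a' b c; rewrite /F3 /= rmorphM /= S_t -mulrA; exact: te_refl.
have L3 : flatten (map F3 [seq (q.1, q.2, p.2) | p <- Delta x, q <- Delta p.1])
        = flatten (map gF (Delta x)).
  rewrite flatten_map_flatten flatten_map_map; congr flatten; apply: eq_map => p.
  by rewrite /gF flatten_map_map -mapE1.
have R3 : flatten (map F3 [seq (p.1, q.1, q.2) | p <- Delta x, q <- Delta p.2])
        = flatten [seq [seq (pi p.1, S q.1 * q.2) | q <- Delta p.2] | p <- Delta x].
  rewrite flatten_map_flatten flatten_map_map; congr flatten; apply: eq_map => p.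
  by rewrite flatten_map_map -mapE1.
rewrite L3 R3 in E3.
have E4 : PT (flatten [seq [seq (pi p.1, S q.1 * q.2) | q <- Delta p.2] | p <- Delta x])
             [:: (pi x, 1)].
  apply: te_trans (_ : PT _ (map (fun p => (pi p.1, t (eps p.2))) (Delta x))) _.
    rewrite (mapE1 (fun p : H * H => (pi p.1, t (eps p.2))) (Delta x)); apply: te_flat => p.
    apply: te_trans (te_sym (te_collect_r _ _ _ _ (Delta p.2)
       (fun q => S q.1 * q.2) (pi p.1))) _.
    rewrite antiL; exact: te_refl.
  apply: te_trans (_ : PT _ (map (fun p => (pi (p.1 * t (eps p.2)), 1)) (Delta x))) _.
    apply: te_mapP => p; apply: te_sym.
    by rewrite -{2}[t _]mulr1; apply: PTbal; exact: Kt.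
  apply: te_trans (te_sym (te_collect_l _ _ _ _ (Delta x)
     (fun p => pi (p.1 * t (eps p.2))) 1)) _.
  rewrite -piQ_sum counitR; exact: te_refl.
have Fin : PT [:: (pi x, 1)] [:: (0, 1)].
  apply: te_trans (te_sym E4) _; apply: te_trans (te_sym E3) _.
  apply: te_trans E _; apply: te_trans E1 _; apply: te_sym; exact: TEzero.
have := HP modQ Fin; rewrite -(piQ0 K0 KB) => /(piQ_eq K0 KB); by rewrite subr0.
Qed.

Lemma coinv_eq : coinv s t Delta I = K.
Proof.
apply: functional_extensionality => x; apply: propositional_extensionality.
by split; [exact: coinv_K | exact: K_coinv].
Qed.
End Hopf.

Unset Implicit Arguments.

Theorem proposition3p26 (k : fieldType) (A H : comAlgType k)
  (s t : {lrmorphism A -> H}) (eps : {lrmorphism H -> A})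
  (Delta : H -> seq (H * H)) (S : {lrmorphism H -> H}) (K : H -> Prop) :
  hopf_algebroid s t eps Delta S ->
  flat_via_s s ->
  sub_hopf_algebroid s t Delta S K ->
  pure_over K ->
  normal_hopf_ideal s t eps Delta S (HKplus eps K) /\
  pure_over (coinv s t Delta (HKplus eps K)).
Proof.
move=> HA _ HK HP; split; first exact: (normal_I HA HK).
by rewrite (coinv_eq HA HK HP).
Qed.
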